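(* Let $0<\alpha\le \frac12$. Then the Ces\`aro operator $\mathcal{C}$ is bounded on the Korenblum space $H^\infty_\alpha$, and its operator norm satisfies $$\|\mathcal{C}\|_{H^\infty_\alpha\to H^\infty_\alpha}=\frac{1}{\alpha}.$$
   Context: $\mathbb{D}$ is the open unit disc and $H(\mathbb{D})$ the space of analytic functions on $\mathbb{D}$. For $f(z)=\sum_{k\ge0}a_kz^k\in H(\mathbb{D})$ the Ces\`aro operator is $\mathcal{C}(f)(z)=\sum_{n\ge0}\Big(\frac{1}{n+1}\sum_{k=0}^n a_k\Big)z^n=\int_0^1\frac{f(tz)}{1-tz}\,dt$. For $0<\alpha<1$, the Korenblum space $H^\infty_\alpha$ consists of $f\in H(\mathbb{D})$ with $\|f\|_{H^\infty_\alpha}=\sup_{z\in\mathbb{D}}(1-|z|^2)^\alpha|f(z)|<\infty$. Operator norms are $\|\mathcal{C}\|_{X\to Y}=\sup\{\|\mathcal{C}f\|_Y:\|f\|_X\le 1\}$. *)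

(* Defs.v *)
From Stdlib Require Import Reals.
From Coquelicot Require Import Coquelicot.
Open Scope R_scope.

(** An analytic function on the unit disc is represented by its Taylor
    coefficients a : nat -> C, required to give a power series converging
    at every point of the open unit disc. *)
Definition analytic_disc (a : nat -> C) : Prop :=
  forall z : C, Cmod z < 1 -> ex_series (fun k => Cmult (a k) (pow_n z k)).

(** Value f(z) = sum_k a_k z^k (meaningful when the series converges). *)
Definition eval_ps (a : nat -> C) (z : C) : C :=
  (Series (fun k => Re (Cmult (a k) (pow_n z k))),
   Series (fun k => Im (Cmult (a k) (pow_n z k)))).

Definition cesaro (a : nat -> C) : nat -> C :=
  fun n => Cdiv (sum_n a n) (RtoC (INR (S n))).

Definition korenblum_norm (alpha : R) (a : nat -> C) : Rbar :=
  Lub_Rbar (fun x => exists z : C, Cmod z < 1 /\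
     x = Rpower (1 - (Cmod z) ^ 2) alpha * Cmod (eval_ps a z)).

Definition cesaro_opnorm (alpha : R) : Rbar :=
  Lub_Rbar (fun x => exists a : nat -> C, analytic_disc a /\
     Rbar_le (korenblum_norm alpha a) 1 /\
     korenblum_norm alpha (cesaro a) = Finite x).

(* Main.v *)
Require Import Defs.
From Stdlib Require Import Reals.
From Coquelicot Require Import Coquelicot.
From Stdlib Require Import Lra Lia.
Open Scope R_scope.


Lemma Re_sum (x : nat -> C) N : Re (sum_n x N) = sum_n (fun n => Re (x n)) N.
Proof.
  induction N as [|N IH].
  - rewrite !sum_O. reflexivity.
  - rewrite !sum_Sn. simpl. rewrite <- IH. reflexivity.
Qed.

Lemma Im_sum (x : nat -> C) N : Im (sum_n x N) = sum_n (fun n => Im (x n)) N.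
Proof.
  induction N as [|N IH].
  - rewrite !sum_O. reflexivity.
  - rewrite !sum_Sn. simpl. rewrite <- IH. reflexivity.
Qed.

Lemma is_series_Re (x : nat -> C) (l : C) :
  @is_series C_AbsRing C_NormedModule x l -> is_series (fun n => Re (x n)) (Re l).
Proof.
  intros H. unfold is_series in *.
  apply filterlim_locally. intros eps.
  generalize (proj1 (filterlim_locally _ _) H eps).
  apply filter_imp. intros N [H1 H2].
  rewrite <- Re_sum. exact H1.
Qed.

Lemma is_series_Im (x : nat -> C) (l : C) :
  @is_series C_AbsRing C_NormedModule x l -> is_series (fun n => Im (x n)) (Im l).
Proof.
  intros H. unfold is_series in *.
  apply filterlim_locally. intros eps.
  generalize (proj1 (filterlim_locally _ _) H eps).
  apply filter_imp. intros N [H1 H2].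
  rewrite <- Im_sum. exact H2.
Qed.

Lemma eval_ps_is (a : nat -> C) w l :
  @is_series C_AbsRing C_NormedModule (fun k => Cmult (a k) (pow_n w k)) l ->
  eval_ps a w = l.
Proof.
  intros H. unfold eval_ps.
  rewrite (is_series_unique _ _ (is_series_Re _ _ H)).
  rewrite (is_series_unique _ _ (is_series_Im _ _ H)).
  destruct l; reflexivity.
Qed.

Lemma is_series_Cscal (u : C) (x : nat -> C) l :
  @is_series C_AbsRing C_NormedModule x l ->
  @is_series C_AbsRing C_NormedModule (fun n => Cmult u (x n)) (Cmult u l).
Proof.
  intros H. apply (@is_series_scal C_AbsRing C_NormedModule u x l H).
Qed.

Lemma Re_conj_mul (l : C) : Re (Cmult (Cconj l) l) = Cmod l ^ 2.
Proof.
  rewrite Cmod2_alt. destruct l as [p q]. simpl. ring.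
Qed.

Lemma Re_mul_le (u x : C) : Rabs (Re (Cmult u x)) <= Cmod u * Cmod x.
Proof. rewrite <- Cmod_mult. apply re_le_Cmod. Qed.

Lemma series_nonneg (b : nat -> R) : (forall n, 0 <= b n) -> ex_series b -> 0 <= Series b.
Proof.
  intros Hb Hex.
  replace 0 with (Series (fun n => 0 * b n)) by (rewrite Series_scal_l; ring).
  apply Series_le; auto. intros; split; [lra| rewrite Rmult_0_l; apply Hb].
Qed.

Lemma Re_series_bound (x : nat -> C) (l u : C) (b : nat -> R) :
  @is_series C_AbsRing C_NormedModule x l ->
  (forall n, Cmod (x n) <= b n) -> ex_series b ->
  Re (Cmult u l) <= Cmod u * Series b.
Proof.
  intros Hl Hb Hex.
  pose proof (is_series_Re _ _ (is_series_Cscal u _ _ Hl)) as H.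
  rewrite <- (is_series_unique _ _ H).
  assert (Hex2 : ex_series (fun n => Rabs (Re (Cmult u (x n))))).
  { apply (@ex_series_le R_AbsRing R_CompleteNormedModule _ (fun n => Cmod u * b n)).
    - intros n. change (norm (Rabs (Re (Cmult u (x n))))) with (Rabs (Rabs (Re (Cmult u (x n))))).
      rewrite Rabs_Rabsolu. eapply Rle_trans; [apply Re_mul_le|].
      apply Rmult_le_compat_l; [apply Cmod_ge_0| apply Hb].
    - exact (@ex_series_scal_l R_AbsRing R_NormedModule (Cmod u) b Hex). }
  eapply Rle_trans; [apply Rle_abs|].
  eapply Rle_trans; [apply Series_Rabs; exact Hex2|].
  rewrite <- Series_scal_l.
  apply Series_le.
  - intros n; split; [apply Rabs_pos|]. eapply Rle_trans; [apply Re_mul_le|].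
    apply Rmult_le_compat_l; [apply Cmod_ge_0| apply Hb].
  - exact (@ex_series_scal_l R_AbsRing R_NormedModule (Cmod u) b Hex).
Qed.

Lemma Cmod_series_bound (x : nat -> C) (l : C) (b : nat -> R) :
  @is_series C_AbsRing C_NormedModule x l ->
  (forall n, Cmod (x n) <= b n) -> ex_series b ->
  Cmod l <= Series b.
Proof.
  intros Hl Hb Hex.
  pose proof (Re_series_bound x l (Cconj l) b Hl Hb Hex) as H.
  rewrite Re_conj_mul, Cmod_conj in H.
  assert (0 <= Series b).
  { apply series_nonneg; auto. intros n; eapply Rle_trans; [apply Cmod_ge_0| apply Hb]. }
  pose proof (Cmod_ge_0 l) as Hl0.
  destruct (Req_dec (Cmod l) 0) as [E|E]; [lra|]. nra.
Qed.

Lemma Cmod_pow_n (w : C) k : Cmod (pow_n w k) = Cmod w ^ k.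
Proof.
  induction k as [|k IH]; simpl.
  - apply Cmod_1.
  - change (mult w (pow_n w k)) with (Cmult w (pow_n w k)). rewrite Cmod_mult, IH. reflexivity.
Qed.

Lemma pow_n_RtoC (x : R) k : pow_n (RtoC x) k = RtoC (x ^ k).
Proof.
  induction k as [|k IH]; simpl.
  - reflexivity.
  - change (mult (RtoC x) (pow_n (RtoC x) k)) with (Cmult (RtoC x) (pow_n (RtoC x) k)).
    rewrite IH, <- RtoC_mult. reflexivity.
Qed.

Lemma pow_n_scal (t : R) (z : C) k : pow_n (Cmult (RtoC t) z) k = Cmult (RtoC (t ^ k)) (pow_n z k).
Proof.
  induction k as [|k IH]; simpl.
  - destruct z; unfold Cmult, RtoC; simpl. change (@one C_Ring) with (RtoC 1).
    unfold RtoC. f_equal; ring.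
  - change (mult (Cmult (RtoC t) z) (pow_n (Cmult (RtoC t) z) k)) with
      (Cmult (Cmult (RtoC t) z) (pow_n (Cmult (RtoC t) z) k)).
    change (mult z (pow_n z k)) with (Cmult z (pow_n z k)).
    rewrite IH. generalize (pow_n z k). intros [p1 p2]. destruct z as [z1 z2].
    unfold Cmult, RtoC; simpl. f_equal; ring.
Qed.

Lemma Cmod_le_ReIm (c : C) : Cmod c <= Rabs (Re c) + Rabs (Im c).
Proof.
  unfold Cmod, Re, Im. destruct c as [p q]. cbn [fst snd].
  rewrite <- (sqrt_pow2 (Rabs p + Rabs q)) by (pose proof (Rabs_pos p); pose proof (Rabs_pos q); lra).
  apply sqrt_le_1_alt.
  pose proof (Rabs_pos p); pose proof (Rabs_pos q).
  rewrite <- (pow2_abs p), <- (pow2_abs q). nra.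
Qed.

Lemma Cmod_sum_le (x : nat -> C) N :
  Cmod (sum_n x N) <= sum_f_R0 (fun k => Cmod (x k)) N.
Proof.
  induction N as [|N IH].
  - rewrite sum_O. simpl. lra.
  - rewrite sum_Sn. simpl. change (plus (sum_n x N) (x (S N))) with (Cplus (sum_n x N) (x (S N))).
    eapply Rle_trans; [apply Cmod_triangle|]. lra.
Qed.

Section Analytic.
Variable a : nat -> C.
Hypothesis Ha : analytic_disc a.

Lemma analytic_is (w : C) : Cmod w < 1 ->
  @is_series C_AbsRing C_NormedModule (fun k => Cmult (a k) (pow_n w k)) (eval_ps a w).
Proof.
  intros Hw. destruct (Ha w Hw) as [l Hl].
  rewrite (eval_ps_is a w l Hl). exact Hl.
Qed.

Lemma radius_ge1 : Rbar_le 1 (CV_radius (fun k => Cmod (a k))).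
Proof.
  destruct (Rbar_le_lt_dec 1 (CV_radius (fun k => Cmod (a k)))) as [H|H]; [exact H|].
  exfalso.
  pose proof (CV_radius_ge_0 (fun k => Cmod (a k))) as H0.
  destruct (CV_radius (fun k => Cmod (a k))) as [R| |] eqn:E; simpl in H, H0; try contradiction.
  set (x := (R + 1) / 2).
  assert (Hx : Rbar_lt (CV_radius (fun k => Cmod (a k))) (Rabs x)).
  { rewrite E. simpl. rewrite Rabs_pos_eq; unfold x; lra. }
  apply (CV_disk_outside _ _ Hx).
  assert (Hw : Cmod (RtoC x) < 1) by (rewrite Cmod_R, Rabs_pos_eq; unfold x; lra).
  pose proof (analytic_is _ Hw) as Hs.
  pose proof (ex_series_lim_0 _ (ex_intro _ _ (is_series_Re _ _ Hs))) as HR.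
  pose proof (ex_series_lim_0 _ (ex_intro _ _ (is_series_Im _ _ Hs))) as HI.
  apply is_lim_seq_abs_0 in HR. apply is_lim_seq_abs_0 in HI.
  apply (is_lim_seq_le_le (fun _ => 0) _ (fun n => Rabs (Re (Cmult (a n) (pow_n (RtoC x) n))) + Rabs (Im (Cmult (a n) (pow_n (RtoC x) n))))).
  - intros n. split.
    + apply Rmult_le_pos; [apply Cmod_ge_0| apply pow_le; unfold x; lra].
    + eapply Rle_trans; [|apply Cmod_le_ReIm].
      rewrite Cmod_mult, Cmod_pow_n, Cmod_R, Rabs_pos_eq by (unfold x; lra). lra.
  - apply is_lim_seq_const.
  - replace (Finite 0) with (Rbar_plus 0 0) by (simpl; f_equal; ring).
    apply is_lim_seq_plus'; assumption.
Qed.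

Lemma abs_conv (rho : R) : 0 <= rho < 1 -> ex_series (fun k => Cmod (a k) * rho ^ k).
Proof.
  intros Hr.
  assert (Hl : Rbar_lt (Rabs rho) (CV_radius (fun k => Cmod (a k)))).
  { rewrite Rabs_pos_eq by lra. eapply Rbar_lt_le_trans; [|apply radius_ge1]. simpl. lra. }
  pose proof (CV_disk_inside _ _ Hl) as H.
  eapply ex_series_ext; [|exact H]. intros n. simpl.
  rewrite Rabs_pos_eq; [reflexivity|].
  apply Rmult_le_pos; [apply Cmod_ge_0| apply pow_le; lra].
Qed.

Definition beta n := sum_f_R0 (fun k => Cmod (a k)) n.

Lemma beta_conv (s : R) : 0 <= s < 1 -> ex_series (fun n => beta n * s ^ n).
Proof.
  intros Hs.
  assert (H1 : ex_series (fun k => Cmod (a k) * s ^ k)) by (apply abs_conv; lra).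
  destruct H1 as [la Hla].
  assert (Hg : is_series (fun k => s ^ k) (/ (1 - s))).
  { apply is_series_geom. rewrite Rabs_pos_eq; lra. }
  assert (Habs1 : ex_series (fun n => Rabs (Cmod (a n) * s ^ n))).
  { eapply ex_series_ext; [|exists la; exact Hla]. intros n; simpl. rewrite Rabs_pos_eq; [reflexivity|].
    apply Rmult_le_pos; [apply Cmod_ge_0| apply pow_le; lra]. }
  assert (Habs2 : ex_series (fun n => Rabs (s ^ n))).
  { eapply ex_series_ext; [|exists (/ (1 - s)); exact Hg]. intros n; simpl. rewrite Rabs_pos_eq; [reflexivity|].
    apply pow_le; lra. }
  pose proof (is_series_mult _ _ _ _ Hla Hg Habs1 Habs2) as Hm.
  eexists. eapply is_series_ext; [|exact Hm].
  intros n. simpl. unfold beta. idtac.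
  rewrite (Rmult_comm (sum_f_R0 _ _)), scal_sum. apply sum_eq. intros k Hk. rewrite Rmult_assoc, <- pow_add.
  f_equal. f_equal. lia.
Qed.

End Analytic.

Lemma is_series_C_unique (x : nat -> C) l1 l2 :
  @is_series C_AbsRing C_NormedModule x l1 ->
  @is_series C_AbsRing C_NormedModule x l2 -> l1 = l2.
Proof.
  intros H1 H2.
  pose proof (is_series_unique _ _ (is_series_Re _ _ H1)) as R1.
  pose proof (is_series_unique _ _ (is_series_Re _ _ H2)) as R2.
  pose proof (is_series_unique _ _ (is_series_Im _ _ H1)) as I1.
  pose proof (is_series_unique _ _ (is_series_Im _ _ H2)) as I2.
  destruct l1 as [p1 q1], l2 as [p2 q2]. simpl in *. f_equal; congruence.
Qed.

Lemma INR_S_neq0 n : RtoC (INR (S n)) <> RtoC 0.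
Proof. intros H. apply RtoC_inj in H. pose proof (pos_INR n). rewrite S_INR in H. lra. Qed.

Section G.
Variable a : nat -> C.
Hypothesis Ha : analytic_disc a.

Lemma Cmod_term_le (w : C) n :
  Cmod (Cmult (sum_n a n) (pow_n w n)) <= beta a n * Cmod w ^ n.
Proof.
  rewrite Cmod_mult, Cmod_pow_n. apply Rmult_le_compat_r; [apply pow_le, Cmod_ge_0|].
  apply Cmod_sum_le.
Qed.

Lemma G_ex (w : C) : Cmod w < 1 ->
  @ex_series C_AbsRing C_NormedModule (fun n => Cmult (sum_n a n) (pow_n w n)).
Proof.
  intros Hw.
  apply (@ex_series_le C_AbsRing C_CompleteNormedModule _ (fun n => beta a n * Cmod w ^ n)).
  - intros n. change (Cmod (Cmult (sum_n a n) (pow_n w n)) <= beta a n * Cmod w ^ n). apply Cmod_term_le.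
  - apply beta_conv; auto. split; [apply Cmod_ge_0| exact Hw].
Qed.

Lemma cesaro_analytic : analytic_disc (cesaro a).
Proof.
  intros z Hz.
  apply (@ex_series_le C_AbsRing C_CompleteNormedModule _ (fun n => beta a n * Cmod z ^ n)).
  - intros n. change (Cmod (Cmult (cesaro a n) (pow_n z n)) <= beta a n * Cmod z ^ n). unfold cesaro.
    rewrite Cmod_mult, Cmod_div by (apply INR_S_neq0).
    rewrite Cmod_pow_n, Cmod_R, Rabs_pos_eq by apply pos_INR.
    apply Rmult_le_compat_r; [apply pow_le, Cmod_ge_0|].
    pose proof (Cmod_sum_le a n) as H. fold (beta a n) in H.
    pose proof (pos_INR n). rewrite S_INR.
    unfold Rdiv. pose proof (Cmod_ge_0 (sum_n a n)).
    assert (Hi: / (INR n + 1) <= 1) by (rewrite <- Rinv_1; apply Rinv_le_contravar; lra).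
    assert (Hi0: 0 < / (INR n + 1)) by (apply Rinv_0_lt_compat; lra).
    assert (0 <= beta a n) by (eapply Rle_trans; eauto). nra.
  - apply beta_conv; auto. split; [apply Cmod_ge_0| exact Hz].
Qed.

Lemma G_identity (w : C) : Cmod w < 1 ->
  exists g, @is_series C_AbsRing C_NormedModule (fun n => Cmult (sum_n a n) (pow_n w n)) g
     /\ eval_ps a w = Cmult (Cminus (RtoC 1) w) g.
Proof.
  intros Hw. destruct (G_ex w Hw) as [g Hg].
  exists g; split; [exact Hg|].
  pose proof (is_series_Cscal w _ _ Hg) as Hwg.
  set (y := fun n => match n with O => RtoC 0 | S k => Cmult w (Cmult (sum_n a k) (pow_n w k)) end).
  assert (Hy : @is_series C_AbsRing C_NormedModule y (Cmult w g)).
  { apply is_series_decr_1.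
    match goal with |- is_series _ ?L => replace L with (Cmult w g) end.
    - exact Hwg.
    - change (Cmult w g = Cplus (Cmult w g) (Copp (RtoC 0))). ring. }
  pose proof (is_series_minus _ _ _ _ Hg Hy) as Hm.
  assert (Hm2 : @is_series C_AbsRing C_NormedModule (fun k => Cmult (a k) (pow_n w k))
                  (Cminus g (Cmult w g))).
  { eapply is_series_ext; [|exact Hm].
    intros n. destruct n as [|k]; simpl.
    - rewrite sum_O. change (plus (Cmult (a 0%nat) one) (opp (RtoC 0))) with
        (Cplus (Cmult (a 0%nat) (RtoC 1)) (Copp (RtoC 0))). 
      change (@one C_Ring) with (RtoC 1). ring.
    - rewrite sum_Sn.
      change (plus (Cmult (plus (sum_n a k) (a (S k))) (mult w (pow_n w k)))
        (opp (Cmult w (Cmult (sum_n a k) (pow_n w k)))))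
        with (Cplus (Cmult (Cplus (sum_n a k) (a (S k))) (Cmult w (pow_n w k)))
        (Copp (Cmult w (Cmult (sum_n a k) (pow_n w k))))).
      change (mult w (pow_n w k)) with (Cmult w (pow_n w k)).
      ring. }
  rewrite (is_series_C_unique _ _ _ (analytic_is a Ha w Hw) Hm2). ring.
Qed.

End G.

Lemma Re_cdiv (u x w : C) (c : R) : c <> 0 ->
  Re (Cmult u (Cmult (Cdiv x (RtoC c)) w)) = Re (Cmult u (Cmult x w)) / c.
Proof.
  intros Hc. destruct u as [u1 u2], x as [x1 x2], w as [w1 w2].
  unfold Cdiv, Cmult, Cinv, RtoC, Re; simpl. field.
  intros H. apply Hc. nra.
Qed.

Lemma Re_tscal (u x w : C) (t : R) :
  Re (Cmult u (Cmult x (Cmult (RtoC t) w))) = Re (Cmult u (Cmult x w)) * t.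
Proof.
  destruct u as [u1 u2], x as [x1 x2], w as [w1 w2].
  unfold Cmult, RtoC, Re; simpl. ring.
Qed.

Definition Psi (K al r t : R) := K * t * exp (- al * ln (1 - (t*r)^2)) / al.

Lemma Psi_derive K al r t : 0 < al -> (t*r)^2 < 1 ->
  is_derive (Psi K al r) t (K / al * exp (- al * ln (1 - (t*r)^2)) * (1 + 2*al*(t*r)^2/(1-(t*r)^2))).
Proof.
  intros Hal Ht. unfold Psi. auto_derive.
  - lra.
  - replace (1 + - (t*r*(t*r*1))) with (1 - (t*r)^2) by ring.
    set (E := exp _). field. lra.
Qed.

Lemma Psi_deriv_ge K al s E : 0 < al -> al <= 1/2 -> 0 <= K -> 0 <= s < 1 -> 0 < E ->
  K * E / (1 - s) <= K / al * E * (1 + 2*al*s^2/(1-s^2)).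
Proof.
  intros Hal Hal2 HK Hs HE.
  assert (H1 : 0 < 1 - s^2) by nra.
  assert (Hk : 2 <= 1 / al).
  { apply (Rmult_le_reg_r al); [lra|]. unfold Rdiv. rewrite Rmult_assoc, Rinv_l by lra. lra. }
  assert (Eq : K / al * E * (1 + 2*al*s^2/(1-s^2)) = K * E * ((1/al) * (1 - s^2) + 2 * s^2) / (1 - s^2)).
  { field. lra. }
  rewrite Eq.
  assert (Eq2 : K * E / (1 - s) = K * E * (1 + s) / (1 - s^2)) by (field; lra).
  rewrite Eq2. unfold Rdiv. apply Rmult_le_compat_r; [apply Rlt_le, Rinv_0_lt_compat; lra|].
  apply Rmult_le_compat_l; [nra|].
  assert (2 * (1 - s^2) <= (1/al) * (1 - s^2)) by nra. nra.
Qed.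

Section Main.
Variable a : nat -> C.
Hypothesis Ha : analytic_disc a.
Variable alpha M : R.
Hypothesis Hal0 : 0 < alpha.
Hypothesis Hal1 : alpha <= 1/2.
Hypothesis HM : forall w, Cmod w < 1 -> Rpower (1 - Cmod w ^ 2) alpha * Cmod (eval_ps a w) <= M.
Variable z u : C.
Hypothesis Hz : Cmod z < 1.

Let r := Cmod z.
Let d n := Re (Cmult u (Cmult (sum_n a n) (pow_n z n))).

Lemma M_nonneg : 0 <= M.
Proof.
  assert (H0 : Cmod (RtoC 0) < 1) by (rewrite Cmod_0; lra).
  pose proof (HM _ H0) as H. eapply Rle_trans; [|exact H].
  apply Rmult_le_pos; [apply Rlt_le, exp_pos| apply Cmod_ge_0].
Qed.

Lemma d_radius : Rbar_lt 1 (CV_radius d).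
Proof.
  assert (Hr : 0 <= r < 1) by (split; [apply Cmod_ge_0| exact Hz]).
  set (s := 2 / (1 + r)).
  assert (Hs1 : 1 < s) by (unfold s; apply (Rmult_lt_reg_r (1 + r)); [lra|]; unfold Rdiv; rewrite Rmult_assoc, Rinv_l; lra).
  assert (Hrs : 0 <= r * s < 1).
  { unfold s. split. - apply Rmult_le_pos; [lra| unfold Rdiv; apply Rmult_le_pos; [lra| apply Rlt_le, Rinv_0_lt_compat; lra]].
    - apply (Rmult_lt_reg_r (1 + r)); [lra|]. unfold Rdiv. rewrite Rmult_assoc, Rmult_assoc, Rinv_l; lra. }
  assert (Hd : CV_disk d s).
  { unfold CV_disk.
    apply (@ex_series_le R_AbsRing R_CompleteNormedModule _ (fun n => Cmod u * (beta a n * (r * s) ^ n))).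
    - intros n. change (norm (Rabs (d n * s ^ n))) with (Rabs (Rabs (d n * s ^ n))).
      rewrite Rabs_Rabsolu, Rabs_mult, (Rabs_pos_eq (s ^ n)) by (apply pow_le; lra).
      rewrite Rpow_mult_distr, <- Rmult_assoc, <- Rmult_assoc.
      apply Rmult_le_compat_r; [apply pow_le; lra|].
      unfold d. eapply Rle_trans; [apply Re_mul_le|].
      rewrite Rmult_assoc. apply Rmult_le_compat_l; [apply Cmod_ge_0|].
      apply Cmod_term_le.
    - exact (@ex_series_scal_l R_AbsRing R_NormedModule (Cmod u) _ (beta_conv a Ha _ Hrs)). }
  pose proof (proj1 (Lub_Rbar_correct (CV_disk d)) s Hd) as H.
  unfold CV_radius. eapply Rbar_lt_le_trans; [|exact H]. simpl. exact Hs1.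
Qed.

Lemma Phi_derive t : Rabs t <= 1 ->
  is_derive (PSeries (PS_Int d)) t (PSeries d t).
Proof.
  intros Ht.
  assert (Hl : Rbar_lt (Rabs t) (CV_radius (PS_Int d))).
  { rewrite CV_radius_Int. eapply Rbar_le_lt_trans; [|apply d_radius]. simpl. exact Ht. }
  pose proof (is_derive_PSeries _ _ Hl) as H.
  rewrite (PSeries_ext (PS_derive (PS_Int d)) d) in H; [exact H|].
  intros n. unfold PS_derive, PS_Int. field. apply not_0_INR. lia.
Qed.

Lemma Phi_cont t : Rabs t <= 1 -> continuity_pt (PSeries (PS_Int d)) t.
Proof.
  intros Ht. apply PSeries_continuity.
  rewrite CV_radius_Int. eapply Rbar_le_lt_trans; [|apply d_radius]. simpl. exact Ht.
Qed.

Lemma Phi_1 : PSeries (PS_Int d) 1 = Re (Cmult u (eval_ps (cesaro a) z)).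
Proof.
  pose proof (analytic_is (cesaro a) (cesaro_analytic a Ha) z Hz) as H.
  pose proof (is_series_Re _ _ (is_series_Cscal u _ _ H)) as H2.
  rewrite <- (is_series_unique _ _ H2).
  unfold PSeries. rewrite Series_incr_1_aux by (simpl; ring).
  apply Series_ext. intros n. unfold PS_Int, cesaro.
  rewrite pow1, Rmult_1_r. rewrite Re_cdiv by (apply not_0_INR; lia). reflexivity.
Qed.

Lemma Phi_0 : PSeries (PS_Int d) 0 = 0.
Proof. rewrite PSeries_0. reflexivity. Qed.

Lemma d_repr t : 0 <= t <= 1 -> exists g,
  PSeries d t = Re (Cmult u g) /\
  eval_ps a (Cmult (RtoC t) z) = Cmult (Cminus (RtoC 1) (Cmult (RtoC t) z)) g.
Proof.
  intros Ht.
  assert (Hr : 0 <= r < 1) by (split; [apply Cmod_ge_0| exact Hz]).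
  set (w := Cmult (RtoC t) z).
  assert (Hw : Cmod w = t * r).
  { unfold w. rewrite Cmod_mult, Cmod_R, Rabs_pos_eq by lra. reflexivity. }
  assert (Htr : 0 <= t * r < 1) by (split; nra).
  assert (Hw1 : Cmod w < 1) by lra.
  destruct (G_identity a Ha w Hw1) as [g [Hg He]].
  exists g; split; [|exact He].
  pose proof (is_series_Re _ _ (is_series_Cscal u _ _ Hg)) as H2.
  rewrite <- (is_series_unique _ _ H2). unfold PSeries. apply Series_ext. intros n.
  unfold w. rewrite pow_n_scal. unfold d.
  rewrite <- Re_tscal. reflexivity.
Qed.

Lemma d_bound t : 0 <= t <= 1 ->
  PSeries d t <= Cmod u * M * Rpower (1 - (t * r)^2) (- alpha) / (1 - t * r).
Proof.
  intros Ht.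
  assert (Hr : 0 <= r < 1) by (split; [apply Cmod_ge_0| exact Hz]).
  set (w := Cmult (RtoC t) z).
  assert (Hw : Cmod w = t * r).
  { unfold w. rewrite Cmod_mult, Cmod_R, Rabs_pos_eq by lra. reflexivity. }
  assert (Htr : 0 <= t * r < 1) by (split; nra).
  assert (Hw1 : Cmod w < 1) by lra.
  destruct (G_identity a Ha w Hw1) as [g [Hg He]].
  pose proof (is_series_Re _ _ (is_series_Cscal u _ _ Hg)) as H2.
  assert (E1 : PSeries d t = Re (Cmult u g)).
  { rewrite <- (is_series_unique _ _ H2). unfold PSeries. apply Series_ext. intros n.
    unfold w. rewrite pow_n_scal. unfold d.
    rewrite <- Re_tscal. reflexivity. }
  rewrite E1.
  eapply Rle_trans; [apply Rle_abs|]. eapply Rle_trans; [apply Re_mul_le|].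
  assert (H1w : 1 - t * r <= Cmod (Cminus (RtoC 1) w)).
  { pose proof (Cmod_triangle (Cminus (RtoC 1) w) w) as T.
    replace (Cplus (Cminus (RtoC 1) w) w) with (RtoC 1) in T by ring.
    rewrite Cmod_1 in T. lra. }
  assert (HF : Cmod (eval_ps a w) = Cmod (Cminus (RtoC 1) w) * Cmod g) by (rewrite He, Cmod_mult; reflexivity).
  pose proof (HM w Hw1) as HMw. rewrite Hw in HMw.
  set (P := Rpower (1 - (t * r)^2) alpha) in HMw.
  assert (HP : 0 < P) by apply exp_pos.
  assert (HPi : Rpower (1 - (t * r)^2) (- alpha) = / P).
  { unfold P. apply Rpower_Ropp. }
  rewrite HPi.
  assert (HFb : Cmod (eval_ps a w) <= M / P).
  { apply (Rmult_le_reg_l P); [exact HP|]. unfold Rdiv. rewrite <- Rmult_assoc, (Rmult_comm P M), Rmult_assoc, Rinv_r by lra. lra. }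
  assert (Hgb : Cmod g <= M / P / (1 - t * r)).
  { apply (Rmult_le_reg_l (1 - t * r)); [lra|].
    replace ((1 - t * r) * (M / P / (1 - t * r))) with (M / P) by (field; lra).
    eapply Rle_trans; [|exact HFb]. rewrite HF. apply Rmult_le_compat_r; [apply Cmod_ge_0| exact H1w]. }
  replace (Cmod u * M * / P / (1 - t * r)) with (Cmod u * (M / P / (1 - t * r))) by (field; lra).
  apply Rmult_le_compat_l; [apply Cmod_ge_0| exact Hgb].
Qed.

Lemma Re_bound : Re (Cmult u (eval_ps (cesaro a) z)) <= Cmod u * M * Rpower (1 - r^2) (- alpha) / alpha.
Proof.
  assert (Hr : 0 <= r < 1) by (split; [apply Cmod_ge_0| exact Hz]).
  set (K := Cmod u * M).
  assert (HK : 0 <= K) by (apply Rmult_le_pos; [apply Cmod_ge_0| apply M_nonneg]).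
  set (h := fun t => Psi K alpha r t - PSeries (PS_Int d) t).
  set (dh := fun t => K / alpha * exp (- alpha * ln (1 - (t*r)^2)) * (1 + 2*alpha*(t*r)^2/(1-(t*r)^2)) - PSeries d t).
  assert (Hder : forall t, Rabs t <= 1 -> is_derive h t (dh t)).
  { intros t Ht. apply (is_derive_minus (Psi K alpha r) (PSeries (PS_Int d))).
    - apply Psi_derive; [exact Hal0|]. rewrite Rpow_mult_distr.
      assert (t^2 <= 1). { rewrite <- (pow2_abs t). pose proof (Rabs_pos t). nra. }
      assert (r^2 < 1) by nra. assert (0 <= t^2) by nra. nra.
    - apply Phi_derive; exact Ht. }
  destruct (MVT_gen h 0 1 dh) as [c [Hc Hmvt]].
  - rewrite Rmin_left, Rmax_right by lra. intros x Hx. apply Hder. rewrite Rabs_pos_eq; lra.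
  - rewrite Rmin_left, Rmax_right by lra. intros x Hx.
    apply continuity_pt_filterlim. apply (ex_derive_continuous h).
    eexists. apply Hder. rewrite Rabs_pos_eq; lra.
  - rewrite Rmin_left, Rmax_right in Hc by lra.
    assert (Hdh : 0 <= dh c).
    { unfold dh. pose proof (d_bound c Hc) as Hb.
      assert (Hcr : 0 <= c * r < 1) by (split; nra).
      pose proof (Psi_deriv_ge K alpha (c * r) (exp (- alpha * ln (1 - (c*r)^2))) Hal0 Hal1 HK Hcr (exp_pos _)) as Hg.
      unfold Rpower in Hb. replace (- alpha * ln (1 - (c * r) ^ 2)) with (- alpha * ln (1 - (c * r) ^ 2)) in Hg by reflexivity.
      unfold K in *. lra. }
    unfold h in Hmvt. rewrite Phi_0 in Hmvt. unfold Psi in Hmvt.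
    rewrite Phi_1 in Hmvt.
    assert (HPsi : K * 1 * exp (- alpha * ln (1 - (1 * r) ^ 2)) / alpha = Cmod u * M * Rpower (1 - r^2) (- alpha) / alpha).
    { unfold Rpower, K. replace (1 * r) with r by ring. rewrite Rmult_1_r. reflexivity. }
    rewrite HPsi in Hmvt. rewrite Rmult_0_r, !Rmult_0_l in Hmvt. unfold K. unfold Rdiv in *. rewrite Rmult_0_l in Hmvt. lra.
Qed.

End Main.

Lemma ces_bound (a : nat -> C) (Ha : analytic_disc a) alpha M
  (Hal0 : 0 < alpha) (Hal1 : alpha <= 1/2)
  (HM : forall w, Cmod w < 1 -> Rpower (1 - Cmod w ^ 2) alpha * Cmod (eval_ps a w) <= M)
  (z : C) (Hz : Cmod z < 1) :
  Rpower (1 - Cmod z ^ 2) alpha * Cmod (eval_ps (cesaro a) z) <= M / alpha.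
Proof.
  set (l := eval_ps (cesaro a) z).
  pose proof (Re_bound a Ha alpha M Hal0 Hal1 HM z (Cconj l) Hz) as H.
  fold l in H. rewrite Re_conj_mul, Cmod_conj in H.
  pose proof (M_nonneg a alpha M HM) as HM0.
  set (Q := Rpower (1 - Cmod z ^ 2) alpha) in *.
  assert (HQ : 0 < Q) by apply exp_pos.
  assert (HQi : Rpower (1 - Cmod z ^ 2) (- alpha) = / Q) by apply Rpower_Ropp.
  rewrite HQi in H.
  assert (Hl : Cmod l <= M * / Q / alpha).
  { pose proof (Cmod_ge_0 l).
    assert (0 <= M * / Q / alpha).
    { unfold Rdiv. apply Rmult_le_pos; [apply Rmult_le_pos; [lra| apply Rlt_le, Rinv_0_lt_compat; lra]| apply Rlt_le, Rinv_0_lt_compat; lra]. }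
    destruct (Req_dec (Cmod l) 0) as [E|E]; [lra|].
    replace (Cmod l * M * / Q / alpha) with (Cmod l * (M * / Q / alpha)) in H by (field; lra).
    nra. }
  apply (Rmult_le_compat_l Q) in Hl; [|lra].
  replace (Q * (M * / Q / alpha)) with (M / alpha) in Hl by (field; lra). exact Hl.
Qed.

Lemma exp_le_mono x y : x <= y -> exp x <= exp y.
Proof. intros [H|H]; [left; apply exp_increasing; exact H| right; subst; reflexivity]. Qed.

Lemma Rbar_le_1_of (R0 : Rbar) : (forall r, 0 <= r < 1 -> Rbar_le r R0) -> Rbar_le 1 R0.
Proof.
  intros H. destruct R0 as [x| |].
  - simpl. destruct (Rle_lt_dec 1 x) as [h|h]; [exact h|].
    exfalso. pose proof (H (Rmax 0 ((x + 1)/2))) as H1. simpl in H1.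
    assert (0 <= Rmax 0 ((x+1)/2) < 1) by (split; [apply Rmax_l| apply Rmax_lub_lt; lra]).
    specialize (H1 H0). pose proof (Rmax_r 0 ((x+1)/2)). lra.
  - simpl. trivial.
  - exfalso. specialize (H 0). simpl in H. apply H. lra.
Qed.

Fixpoint cc (al : R) (n : nat) : R :=
  match n with
  | O => Rpower 2 (- al)
  | S k => cc al k * (INR k + al) / (INR k + 1)
  end.

Section Test.
Variable al : R.
Hypothesis Hal0 : 0 < al.
Hypothesis Hal1 : al <= 1/2.

Lemma cc_pos n : 0 < cc al n.
Proof.
  induction n as [|n IH]; simpl.
  - apply exp_pos.
  - pose proof (pos_INR n). apply Rmult_lt_0_compat; [apply Rmult_lt_0_compat; lra|].
    apply Rinv_0_lt_compat; lra.
Qed.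

Lemma cc_le n : cc al n <= cc al 0.
Proof.
  induction n as [|n IH]; [simpl; lra|].
  eapply Rle_trans; [|exact IH]. simpl cc at 1. pose proof (pos_INR n). pose proof (cc_pos n).
  unfold Rdiv. rewrite Rmult_assoc. rewrite <- (Rmult_1_r (cc al n)) at 2.
  apply Rmult_le_compat_l; [lra|].
  apply (Rmult_le_reg_r (INR n + 1)); [lra|]. rewrite Rmult_assoc, Rinv_l by lra. lra.
Qed.

Lemma cc_rec n : INR (S n) * cc al (S n) = (INR n + al) * cc al n.
Proof. simpl cc. rewrite S_INR. pose proof (pos_INR n). field. lra. Qed.

Lemma radius_cc : Rbar_le 1 (CV_radius (cc al)).
Proof.
  apply Rbar_le_1_of. intros r Hr.
  apply (proj1 (CV_radius_bounded (cc al))). exists (cc al 0). intros n.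
  rewrite Rabs_mult, Rabs_pos_eq by (apply Rlt_le, cc_pos).
  rewrite Rabs_pos_eq by (apply pow_le; lra).
  rewrite <- (Rmult_1_r (cc al 0)). apply Rmult_le_compat; [apply Rlt_le, cc_pos| apply pow_le; lra| apply cc_le|].
  rewrite <- (pow1 n). apply pow_incr. lra.
Qed.

Lemma cc_in t : Rabs t < 1 -> Rbar_lt (Rabs t) (CV_radius (cc al)).
Proof. intros Ht. eapply Rbar_lt_le_trans; [|apply radius_cc]. simpl. exact Ht. Qed.

Lemma Pd_eq t : Rabs t < 1 ->
  (1 - t) * PSeries (PS_derive (cc al)) t = al * PSeries (cc al) t.
Proof.
  intros Ht. pose proof (cc_in t Ht) as Hin.
  set (D := PS_derive (cc al)).
  assert (HD : Rbar_lt (Rabs t) (CV_radius D)) by (unfold D; rewrite CV_radius_derive; exact Hin).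
  assert (E1 : PSeries D t = PSeries (PS_plus (PS_incr_1 D) (PS_scal al (cc al))) t).
  { apply PSeries_ext. intros n. unfold PS_plus, PS_scal, PS_incr_1, D, PS_derive.
    change (plus ?x ?y) with (x + y). change (scal ?x ?y) with (x * y).
    destruct n as [|k].
    - rewrite cc_rec. simpl INR. change (@zero (NormedModule.AbelianMonoid R_AbsRing R_NormedModule)) with 0. ring.
    - rewrite cc_rec. ring. }
  rewrite PSeries_plus in E1.
  - rewrite PSeries_incr_1, PSeries_scal in E1. lra.
  - apply CV_radius_inside. rewrite CV_radius_incr_1. exact HD.
  - apply CV_radius_inside. rewrite CV_radius_scal by lra. exact Hin.
Qed.

Lemma P_closed rho : 0 <= rho < 1 -> PSeries (cc al) rho = cc al 0 * Rpower (1 - rho) (- al).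
Proof.
  intros Hr.
  set (h := fun t => exp (al * ln (1 - t)) * PSeries (cc al) t).
  assert (Hder : forall t, Rabs t < 1 -> is_derive h t 0).
  { intros t Ht.
    assert (Ht1 : t < 1) by (pose proof (Rle_abs t); lra).
    assert (HE : is_derive (fun t => exp (al * ln (1 - t))) t (exp (al * ln (1 - t)) * (- al / (1 - t)))).
    { auto_derive; [lra|]. replace (1 + - t) with (1 - t) by ring. field. lra. }
    pose proof (is_derive_PSeries _ _ (cc_in t Ht)) as HP.
    pose proof (is_derive_mult _ _ _ _ _ HE HP) as Hm.
    assert (Hc : forall n m : R_AbsRing, mult n m = mult m n) by (intros; apply Rmult_comm).
    specialize (Hm Hc).
    replace 0 with (plus (mult (exp (al * ln (1 - t)) * (- al / (1 - t))) (PSeries (cc al) t))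
                         (mult (exp (al * ln (1 - t))) (PSeries (PS_derive (cc al)) t))).
    - exact Hm.
    - change (plus ?x ?y) with (x + y). change (mult ?x ?y) with (x * y).
      pose proof (Pd_eq t Ht) as Hq.
      replace (PSeries (PS_derive (cc al)) t) with (al * PSeries (cc al) t / (1 - t))
        by (rewrite <- Hq; field; lra).
      match goal with |- ?L = _ => assert (X : (L = 0)%R) by (field; lra) end. exact X. }
  destruct (Req_dec rho 0) as [E0|E0].
  - subst rho. rewrite PSeries_0. rewrite Rminus_0_r. unfold Rpower. rewrite ln_1, Rmult_0_r, exp_0. ring.
  - destruct (MVT_gen h 0 rho (fun _ => 0)) as [c [Hc Hmvt]].
    + rewrite Rmin_left, Rmax_right by lra. intros x Hx. apply Hder. rewrite Rabs_pos_eq; lra.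
    + rewrite Rmin_left, Rmax_right by lra. intros x Hx.
      apply continuity_pt_filterlim. apply (ex_derive_continuous h).
      eexists. apply Hder. rewrite Rabs_pos_eq; lra.
    + unfold h in Hmvt. rewrite PSeries_0, Rminus_0_r, ln_1, Rmult_0_r, exp_0 in Hmvt.
      assert (Hx : exp (al * ln (1 - rho)) * PSeries (cc al) rho = cc al 0) by lra.
      unfold Rpower. rewrite <- Hx. rewrite Rmult_comm, <- Rmult_assoc, <- exp_plus.
      replace (- al * ln (1 - rho) + al * ln (1 - rho)) with 0 by ring. rewrite exp_0. ring.
Qed.

End Test.

Definition att (al : R) (k : nat) : C := RtoC (cc al k).

Section Test2.
Variable al : R.
Hypothesis Hal0 : 0 < al.
Hypothesis Hal1 : al <= 1/2.

Lemma Cmod_att_term w k : Cmod (Cmult (att al k) (pow_n w k)) = cc al k * Cmod w ^ k.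
Proof.
  rewrite Cmod_mult, Cmod_pow_n. unfold att. rewrite Cmod_R, Rabs_pos_eq by (apply Rlt_le, cc_pos; lra).
  reflexivity.
Qed.

Lemma geom_ex rho : 0 <= rho < 1 -> ex_series (fun k => cc al 0 * rho ^ k).
Proof.
  intros H. apply (@ex_series_scal_l R_AbsRing R_NormedModule (cc al 0) (fun k => rho ^ k)).
  apply ex_series_geom. rewrite Rabs_pos_eq; lra.
Qed.

Lemma att_analytic : analytic_disc (att al).
Proof.
  intros w Hw.
  apply (@ex_series_le C_AbsRing C_CompleteNormedModule _ (fun k => cc al 0 * Cmod w ^ k)).
  - intros n. change (Cmod (Cmult (att al n) (pow_n w n)) <= cc al 0 * Cmod w ^ n).
    rewrite Cmod_att_term. apply Rmult_le_compat_r; [apply pow_le, Cmod_ge_0| apply cc_le; lra].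
  - apply geom_ex. split; [apply Cmod_ge_0| exact Hw].
Qed.

Lemma eval_att_real x : eval_ps (att al) (RtoC x) = RtoC (PSeries (cc al) x).
Proof.
  unfold eval_ps, PSeries.
  assert (H1 : Series (fun k => Re (Cmult (att al k) (pow_n (RtoC x) k))) = Series (fun k => cc al k * x ^ k)).
  { apply Series_ext. intros n. unfold att. rewrite pow_n_RtoC. unfold RtoC, Cmult, Re; simpl. ring. }
  assert (H2 : Series (fun k => Im (Cmult (att al k) (pow_n (RtoC x) k))) = 0).
  { transitivity (Series (fun n : nat => 0 * 0)).
    + apply Series_ext. intros n. unfold att. rewrite pow_n_RtoC. unfold RtoC, Cmult, Im; simpl. ring.
    + rewrite Series_scal_l. ring. }
  rewrite H1, H2. reflexivity.
Qed.

Lemma att_norm_pt w : Cmod w < 1 -> Rpower (1 - Cmod w ^ 2) al * Cmod (eval_ps (att al) w) <= 1.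
Proof.
  intros Hw. set (rho := Cmod w).
  assert (Hr : 0 <= rho < 1) by (split; [apply Cmod_ge_0| exact Hw]).
  assert (H1 : Cmod (eval_ps (att al) w) <= PSeries (cc al) rho).
  { unfold PSeries. apply (Cmod_series_bound _ _ _ (analytic_is _ att_analytic w Hw)).
    - intros n. rewrite Cmod_att_term. right. reflexivity.
    - apply (ex_series_le (K := R_AbsRing) (V := R_CompleteNormedModule) _ (fun k => cc al 0 * rho ^ k)).
      + intros n. change (norm (cc al n * rho ^ n)) with (Rabs (cc al n * rho ^ n)).
        rewrite Rabs_pos_eq by (apply Rmult_le_pos; [apply Rlt_le, cc_pos; lra| apply pow_le; lra]).
        apply Rmult_le_compat_r; [apply pow_le; lra| apply cc_le; lra].
      + apply geom_ex; exact Hr. }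
  rewrite P_closed in H1 by assumption.
  assert (HP : 0 < Rpower (1 - rho ^ 2) al) by apply exp_pos.
  eapply Rle_trans; [apply Rmult_le_compat_l; [lra| exact H1]|].
  simpl cc. unfold Rpower.
  rewrite <- !exp_plus.
  replace (1 - rho ^ 2) with ((1 - rho) * (1 + rho)) by ring.
  rewrite ln_mult by lra.
  apply Rle_trans with (exp 0); [apply exp_le_mono| rewrite exp_0; lra].
  assert (ln (1 + rho) <= ln 2) by (apply ln_le; lra).
  nra.
Qed.

Lemma att_ces_real r : 0 < r < 1 ->
  Re (eval_ps (cesaro (att al)) (RtoC r)) = cc al 0 * (Rpower (1 - r) (- al) - 1) / (al * r).
Proof.
  intros Hr.
  assert (Hz : Cmod (RtoC r) < 1) by (rewrite Cmod_R, Rabs_pos_eq; lra).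
  pose proof (Phi_1 _ att_analytic (RtoC r) (RtoC 1) Hz) as H1.
  rewrite Cmult_1_l in H1. rewrite <- H1.
  set (d := fun n : nat => Re (Cmult (RtoC 1) (Cmult (sum_n (att al) n) (pow_n (RtoC r) n)))).
  fold d.
  set (Psi2 := fun t => cc al 0 * (exp (- al * ln (1 - t * r)) - 1) / (al * r)).
  set (dd := fun t => cc al 0 * exp (- al * ln (1 - t * r)) / (1 - t * r)).
  assert (HPsi : forall t, 0 <= t <= 1 -> is_derive Psi2 t (dd t)).
  { intros t Ht. assert (t * r < 1) by nra. unfold Psi2, dd. auto_derive; [lra|].
    replace (1 + - (t * r)) with (1 - t * r) by ring. change (cc al 0) with (Rpower 2 (- al)). field. split; lra. }
  assert (Hd : forall t, 0 <= t <= 1 -> PSeries d t = dd t).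
  { intros t Ht.
    destruct (d_repr _ att_analytic al Hal0 Hal1 (RtoC r) (RtoC 1) Hz t Ht) as [g [Hg He]].
    fold d in Hg. rewrite Hg, Cmult_1_l.
    rewrite <- RtoC_mult, eval_att_real, P_closed in He by (first [split; nra | nra | lra]).
    replace (Cminus (RtoC 1) (RtoC (t * r))) with (RtoC (1 - t * r)) in He by (rewrite RtoC_minus; reflexivity).
    apply (f_equal Re) in He. rewrite re_scal_l, re_RtoC in He.
    unfold dd. unfold Rpower in He. rewrite He. field. nra. }
  set (h := fun t => PSeries (PS_Int d) t - Psi2 t).
  assert (Hder : forall t, 0 <= t <= 1 -> is_derive h t 0).
  { intros t Ht.
    replace 0 with (PSeries d t - dd t) by (rewrite Hd by exact Ht; ring).
    apply (is_derive_minus (PSeries (PS_Int d)) Psi2).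
    - apply (Phi_derive _ att_analytic al Hal0 Hal1 (RtoC r) (RtoC 1) Hz). rewrite Rabs_pos_eq; lra.
    - apply HPsi; exact Ht. }
  destruct (MVT_gen h 0 1 (fun _ => 0)) as [c [Hc Hmvt]].
  - rewrite Rmin_left, Rmax_right by lra. intros x Hx. apply Hder. lra.
  - rewrite Rmin_left, Rmax_right by lra. intros x Hx.
    apply continuity_pt_filterlim. apply (ex_derive_continuous h).
    eexists. apply Hder. lra.
  - unfold h in Hmvt. unfold d in Hmvt. rewrite (Phi_0 (att al) (RtoC r) (RtoC 1)) in Hmvt.
    unfold Psi2 in Hmvt. rewrite Rmult_0_l, Rminus_0_r, ln_1, Rmult_0_r, exp_0 in Hmvt.
    unfold Rpower. rewrite Rmult_1_l in Hmvt.
    replace (cc al 0 * (1 - 1) / (al * r)) with 0 in Hmvt by (field; lra). unfold d. lra.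
Qed.

End Test2.

Lemma alg_lb al eta : 0 < al -> al <= 1/2 -> 0 < eta < 1 ->
  let r := 1 - Rpower eta (/ al) in
  0 < r < 1 /\
  (1 - eta) ^ 2 / al <= Rpower (1 - r ^ 2) al * (Rpower 2 (- al) * (Rpower (1 - r) (- al) - 1) / (al * r)).
Proof.
  intros Hal0 Hal1 Heta r.
  set (L := ln eta).
  assert (HL : L < 0) by (unfold L; rewrite <- ln_1; apply ln_increasing; lra).
  assert (HeL : exp L = eta) by (unfold L; apply exp_ln; lra).
  assert (Hia : 2 <= / al).
  { apply (Rmult_le_reg_r al); [lra|]. rewrite Rinv_l by lra. lra. }
  set (dl := Rpower eta (/ al)).
  assert (Hdl : dl = exp (/ al * L)) by reflexivity.
  assert (Hdl0 : 0 < dl) by (rewrite Hdl; apply exp_pos).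
  assert (Hdle : dl <= eta) by (rewrite Hdl, <- HeL; apply exp_le_mono; nra).
  assert (Hr : r = 1 - dl) by reflexivity.
  assert (Hr01 : 0 < r < 1) by lra.
  split; [exact Hr01|].
  assert (Hlndl : ln dl = / al * L) by (rewrite Hdl; apply ln_exp).
  assert (E1 : 1 - r ^ 2 = dl * (2 - dl)) by (rewrite Hr; ring).
  assert (E2 : 1 - r = dl) by (rewrite Hr; ring).
  rewrite E1, E2. unfold Rpower.
  rewrite ln_mult by lra. rewrite Hlndl.
  replace (al * (/ al * L + ln (2 - dl))) with (L + al * ln (2 - dl)) by (field; lra).
  replace (- al * (/ al * L)) with (- L) by (field; lra).
  rewrite exp_plus, HeL, exp_Ropp, HeL.
  set (A := exp (al * ln (2 - dl)) * exp (- al * ln 2)).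
  assert (HA : A = exp (al * ln ((2 - dl) / 2))).
  { unfold A. rewrite <- exp_plus. f_equal. rewrite ln_div by lra. ring. }
  assert (HAge : (2 - dl) / 2 <= A).
  { rewrite HA. assert (Hx : ln ((2 - dl) / 2) <= 0).
    { rewrite <- ln_1. apply ln_le; lra. }
    rewrite <- (exp_ln ((2 - dl) / 2)) at 1 by lra. apply exp_le_mono. nra. }
  replace (eta * exp (al * ln (2 - dl)) * (exp (- al * ln 2) * (/ eta - 1) / (al * r)))
    with (A * (1 - eta) / (al * r)) by (unfold A; field; lra).
  assert (HA1 : 1 - eta <= A) by lra.
  unfold Rdiv. rewrite Rinv_mult.
  assert (Hr1 : 1 <= / r).
  { rewrite <- Rinv_1. apply Rinv_le_contravar; lra. }
  assert (Hia0 : 0 < / al) by (apply Rinv_0_lt_compat; lra).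
  assert (0 <= 1 - eta) by lra.
  assert (H2 : (1 - eta) ^ 2 <= A * (1 - eta)) by nra.
  assert (H4 : 0 <= A * (1 - eta)) by nra.
  assert (H3 : A * (1 - eta) <= A * (1 - eta) * / r) by nra.
  replace (A * (1 - eta) * (/ al * / r)) with ((A * (1 - eta) * / r) * / al) by ring.
  apply Rmult_le_compat_r; lra.
Qed.

Lemma korenblum_ge al a w : Cmod w < 1 ->
  Rbar_le (Rpower (1 - Cmod w ^ 2) al * Cmod (eval_ps a w)) (korenblum_norm al a).
Proof.
  intros Hw. apply (proj1 (Lub_Rbar_correct _)). exists w. split; [exact Hw| reflexivity].
Qed.

Lemma korenblum_le al a B :
  (forall w, Cmod w < 1 -> Rpower (1 - Cmod w ^ 2) al * Cmod (eval_ps a w) <= B) ->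
  Rbar_le (korenblum_norm al a) (Finite B).
Proof.
  intros H. apply (proj2 (Lub_Rbar_correct _)). intros x [w [Hw ->]]. simpl. apply H; exact Hw.
Qed.

Lemma korenblum_ge0 al a : Rbar_le (Finite 0) (korenblum_norm al a).
Proof.
  assert (H0 : Cmod (RtoC 0) < 1) by (rewrite Cmod_0; lra).
  eapply Rbar_le_trans; [|apply (korenblum_ge al a _ H0)]. simpl.
  apply Rmult_le_pos; [apply Rlt_le, exp_pos| apply Cmod_ge_0].
Qed.

Lemma part1 al (Hal0 : 0 < al) (Hal1 : al <= 1/2) a :
  analytic_disc a -> Rbar_lt (korenblum_norm al a) p_infty ->
  analytic_disc (cesaro a) /\
  Rbar_le (korenblum_norm al (cesaro a)) (Rbar_mult (Finite (1 / al)) (korenblum_norm al a)).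
Proof.
  intros Ha Hfin. split; [apply cesaro_analytic; exact Ha|].
  pose proof (korenblum_ge0 al a) as H0.
  pose proof (fun w => korenblum_ge al a w) as Hge.
  destruct (korenblum_norm al a) as [M| |]; simpl in Hfin, H0; try contradiction.
  change (Rbar_le (korenblum_norm al (cesaro a)) (Finite (1 / al * M))).
  apply korenblum_le. intros w Hw.
  replace (1 / al * M) with (M / al) by (field; lra).
  apply ces_bound; auto.
Qed.

Theorem theorem3p1 (alpha : R) (halpha0 : 0 < alpha) (halpha1 : alpha <= 1 / 2) :
  (forall a : nat -> C, analytic_disc a ->
     Rbar_lt (korenblum_norm alpha a) p_infty ->
     analytic_disc (cesaro a) /\
     Rbar_le (korenblum_norm alpha (cesaro a))
             (Rbar_mult (Finite (1 / alpha)) (korenblum_norm alpha a))) /\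
  cesaro_opnorm alpha = Finite (1 / alpha).
Proof.
  split; [intros a; apply part1; auto|].
  set (f := att alpha).
  assert (Hf : analytic_disc f) by (apply att_analytic; auto).
  assert (Hfn : Rbar_le (korenblum_norm alpha f) (Finite 1)).
  { apply korenblum_le. intros w Hw. apply att_norm_pt; auto. }
  assert (Hia : 0 < 1 / alpha) by (unfold Rdiv; rewrite Rmult_1_l; apply Rinv_0_lt_compat; lra).
  assert (HCf : korenblum_norm alpha (cesaro f) = Finite (1 / alpha)).
  { assert (Hfin : Rbar_lt (korenblum_norm alpha f) p_infty).
    { eapply Rbar_le_lt_trans; [exact Hfn| simpl; trivial]. }
    destruct (part1 alpha halpha0 halpha1 f Hf Hfin) as [_ Hup].
    pose proof (korenblum_ge0 alpha f) as Hf0.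
    destruct (korenblum_norm alpha f) as [m| |]; simpl in Hfn, Hf0; try contradiction.
    change (Rbar_le (korenblum_norm alpha (cesaro f)) (Finite (1 / alpha * m))) in Hup.
    assert (Hlow : forall eta, 0 < eta < 1 ->
              Rbar_le (Finite ((1 - eta) ^ 2 / alpha)) (korenblum_norm alpha (cesaro f))).
    { intros eta Heta.
      destruct (alg_lb alpha eta halpha0 halpha1 Heta) as [Hr Hv].
      set (r := 1 - Rpower eta (/ alpha)) in *.
      assert (Hz : Cmod (RtoC r) < 1) by (rewrite Cmod_R, Rabs_pos_eq; lra).
      eapply Rbar_le_trans; [|apply (korenblum_ge alpha (cesaro f) _ Hz)]. simpl.
      rewrite Cmod_R, Rabs_pos_eq by lra.
      eapply Rle_trans; [exact Hv|].
      apply Rmult_le_compat_l; [apply Rlt_le, exp_pos|].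
      unfold f. change (Rpower 2 (- alpha)) with (cc alpha 0). rewrite <- (att_ces_real alpha halpha0 halpha1 r Hr).
      eapply Rle_trans; [apply Rle_abs| apply re_le_Cmod]. }
    pose proof (korenblum_ge0 alpha (cesaro f)) as Hc0.
    destruct (korenblum_norm alpha (cesaro f)) as [L| |]; simpl in Hup, Hc0; try contradiction.
    f_equal.
    assert (HL1 : L <= 1 / alpha) by nra.
    destruct (Rle_lt_dec (1 / alpha) L) as [h|h]; [lra|].
    exfalso.
    set (eta := Rmin (1/2) ((1 - alpha * L) / 4)).
    assert (HaL : 0 < 1 - alpha * L).
    { assert (alpha * L < alpha * (1 / alpha)) by (apply Rmult_lt_compat_l; lra).
      replace (alpha * (1 / alpha)) with 1 in H by (field; lra). lra. }
    assert (Heta : 0 < eta < 1).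
    { unfold eta. split; [apply Rmin_glb_lt; lra| eapply Rle_lt_trans; [apply Rmin_l| lra]]. }
    assert (Heta2 : eta <= (1 - alpha * L) / 4) by apply Rmin_r.
    specialize (Hlow eta Heta). simpl in Hlow.
    assert (Hq : (1 - 2 * eta) / alpha <= (1 - eta) ^ 2 / alpha).
    { unfold Rdiv. apply Rmult_le_compat_r; [apply Rlt_le, Rinv_0_lt_compat; lra| nra]. }
    assert (Hk : (1 - 2 * eta) <= alpha * L).
    { apply (Rmult_le_reg_r (/ alpha)); [apply Rinv_0_lt_compat; lra|].
      replace (alpha * L * / alpha) with L by (field; lra). unfold Rdiv in Hq. lra. }
    lra. }
  apply is_lub_Rbar_unique. split.
  - intros x [a [Ha [Hn Hx]]].
    assert (Hfin : Rbar_lt (korenblum_norm alpha a) p_infty).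
    { eapply Rbar_le_lt_trans; [exact Hn| simpl; trivial]. }
    destruct (part1 alpha halpha0 halpha1 a Ha Hfin) as [_ Hup].
    rewrite Hx in Hup.
    pose proof (korenblum_ge0 alpha a) as Ha0.
    destruct (korenblum_norm alpha a) as [m| |]; simpl in Hn, Ha0, Hup; try contradiction.
    simpl. nra.
  - intros b Hb. apply Hb. exists f. split; [exact Hf|]. split; [exact Hfn| exact HCf].
Qed.
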